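(* Suppose Assumptions 1–4 hold and $p$ is convex. Let $\mathbf{x}$ be a Cournot candidate and $\mathbf{x}^S$ a social optimum. If $p(X)=p(X^S)$, then $p'(X)=0$ and $\gamma(\mathbf{x})=1$.
   Context: Cournot model: $N$ suppliers, inverse demand $p:[0,\infty)\to[0,\infty)$, supplier $n$ has cost $C_n:[0,\infty)\to[0,\infty)$ and chooses $x_n\ge0$; $X=\sum_n x_n$, $X^S=\sum_n x_n^S$. $\partial_\pm$ denote right/left derivatives; $C_n'(0)$ is the right derivative at $0$. Assumption 1: each $C_n$ is convex, continuous, nondecreasing on $[0,\infty)$, continuously differentiable on $(0,\infty)$, with $C_n(0)=0$. Assumption 2: $p$ is continuous, nonnegative, nonincreasing, $p(0)>0$; its right derivative at $0$ exists and at every $q>0$ its left and right derivatives exist. Assumption 3: there exists $R>0$ such that $p(R)\le\min_n C_n'(0)$. Assumption 4: $p(0)>\min_n C_n'(0)$. Social welfare of $\mathbf{x}\ge0$: $W(\mathbf{x})=\int_0^X p(q)\,dq-\sum_{n=1}^N C_n(x_n)$; a social optimum maximizes $W$. Efficiency: $\gamma(\mathbf{x})=W(\mathbf{x})/W(\mathbf{x}^S)$ for a social optimum $\mathbf{x}^S$. A nonnegative vector $\mathbf{x}$ is a Cournot candidate if for every $n$: $C_n'(x_n)\le p(X)+x_n\,\partial_-p(X)$ whenever $x_n>0$, and $C_n'(x_n)\ge p(X)+x_n\,\partial_+p(X)$. (For convex $p$ and $X>0$, $p$ is differentiable at $X$.) *)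

(* Defs.v *)
From Stdlib Require Import Reals Lra List ClassicalEpsilon.
Open Scope R_scope.

Definition sumN (N : nat) (f : nat -> R) : R :=
  fold_right Rplus 0 (map f (seq 0 N)).

(* Riemann integral of f on [a,b] (value of RiemannInt when f is integrable;
   RiemannInt is proof-irrelevant). *)
Definition integral (f : R -> R) (a b : R) : R :=
  epsilon (inhabits 0)
    (fun I => exists pr : Riemann_integrable f a b, RiemannInt pr = I).

Definition right_deriv (f : R -> R) (x l : R) : Prop :=
  forall eps, 0 < eps -> exists delta, 0 < delta /\
    forall h, 0 < h < delta -> Rabs ((f (x + h) - f x) / h - l) < eps.

Definition left_deriv (f : R -> R) (x l : R) : Prop :=
  forall eps, 0 < eps -> exists delta, 0 < delta /\
    forall h, - delta < h < 0 -> Rabs ((f (x + h) - f x) / h - l) < eps.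

Definition convex_nonneg (f : R -> R) : Prop :=
  forall a b t, 0 <= a -> 0 <= b -> 0 <= t <= 1 ->
    f (t * a + (1 - t) * b) <= t * f a + (1 - t) * f b.

Definition continuous_nonneg (f : R -> R) : Prop :=
  forall x, 0 <= x -> forall eps, 0 < eps -> exists delta, 0 < delta /\
    forall y, 0 <= y -> Rabs (y - x) < delta -> Rabs (f y - f x) < eps.

Definition nondecreasing_nonneg (f : R -> R) : Prop :=
  forall a b, 0 <= a -> a <= b -> f a <= f b.

Definition nonincreasing_nonneg (f : R -> R) : Prop :=
  forall a b, 0 <= a -> a <= b -> f b <= f a.

(* Assumption 1 for one cost function C with derivative function dC:
   dC y is the derivative of C at y > 0 and dC 0 is the right derivative at 0. *)
Definition cost_assumption (C dC : R -> R) : Prop :=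
  convex_nonneg C /\ continuous_nonneg C /\ nondecreasing_nonneg C /\
  (forall y, 0 < y -> derivable_pt_lim C y (dC y)) /\
  (forall y, 0 < y -> continuity_pt dC y) /\
  right_deriv C 0 (dC 0) /\
  C 0 = 0.

(* Assumption 2; dpr q = right derivative of p at q >= 0,
   dpl q = left derivative of p at q > 0. *)
Definition price_assumption (p dpr dpl : R -> R) : Prop :=
  continuous_nonneg p /\
  (forall q, 0 <= q -> 0 <= p q) /\
  nonincreasing_nonneg p /\
  0 < p 0 /\
  (forall q, 0 <= q -> right_deriv p q (dpr q)) /\
  (forall q, 0 < q -> left_deriv p q (dpl q)).

Definition nonneg_vec (N : nat) (x : nat -> R) : Prop :=
  forall n, (n < N)%nat -> 0 <= x n.

Definition total (N : nat) (x : nat -> R) : R := sumN N x.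

Definition welfare (N : nat) (p : R -> R) (C : nat -> R -> R) (x : nat -> R) : R :=
  integral p 0 (total N x) - sumN N (fun n => C n (x n)).

Definition social_optimum (N : nat) (p : R -> R) (C : nat -> R -> R)
    (xS : nat -> R) : Prop :=
  nonneg_vec N xS /\
  forall y, nonneg_vec N y -> welfare N p C y <= welfare N p C xS.

Definition efficiency (N : nat) (p : R -> R) (C : nat -> R -> R)
    (x xS : nat -> R) : R :=
  welfare N p C x / welfare N p C xS.

Definition cournot_candidate (N : nat) (p dpr dpl : R -> R)
    (dC : nat -> R -> R) (x : nat -> R) : Prop :=
  nonneg_vec N x /\
  forall n, (n < N)%nat ->
    (0 < x n -> dC n (x n) <= p (total N x) + x n * dpl (total N x)) /\
    p (total N x) + x n * dpr (total N x) <= dC n (x n).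

(* Main.v *)
Require Import Defs.
From Stdlib Require Import Reals Lra Lia List ClassicalEpsilon Classical.
Open Scope R_scope.

Lemma cont_ext (f : R -> R) : continuous_nonneg f ->
  forall x, continuity_pt (fun y => f (Rmax 0 y)) x.
Proof.
  intros Hf x eps Heps.
  destruct (Hf (Rmax 0 x) (Rmax_l 0 x) eps Heps) as [d [Hd Hy]].
  exists d; split; [exact Hd|].
  intros y [_ Hyx]. simpl in *. unfold R_dist in *.
  apply Hy; [apply Rmax_l|].
  eapply Rle_lt_trans; [|exact Hyx].
  unfold Rmax; repeat destruct Rle_dec; unfold Rabs; repeat destruct Rcase_abs; lra.
Qed.

Lemma integ_nonneg (f : R -> R) a b : continuous_nonneg f -> 0 <= a <= b ->
  Riemann_integrable f a b.
Proof.
  intros Hf Hab.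
  refine (@Riemann_integrable_ext (fun y => f (Rmax 0 y)) f a b _ _).
  - intros x Hx. rewrite Rmin_left in Hx by lra. rewrite Rmax_right in Hx by lra.
    cbv beta. rewrite Rmax_right by lra. reflexivity.
  - apply continuity_implies_RiemannInt; [lra|]. intros; apply cont_ext; auto.
Qed.

Lemma integral_val (f : R -> R) b (pr : Riemann_integrable f 0 b) :
  integral f 0 b = RiemannInt pr.
Proof.
  unfold integral.
  destruct (epsilon_spec (inhabits 0)
    (fun I => exists pr : Riemann_integrable f 0 b, RiemannInt pr = I))
    as [pr' Hpr'].
  { exists (RiemannInt pr), pr; reflexivity. }
  rewrite <- Hpr'. apply RiemannInt_P5.
Qed.

Lemma integral_bound (f : R -> R) a b l u : continuous_nonneg f -> 0 <= a <= b ->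
  (forall x, a <= x <= b -> l <= f x <= u) ->
  l * (b - a) <= integral f 0 b - integral f 0 a <= u * (b - a).
Proof.
  intros Hf Hab Hb.
  pose proof (integ_nonneg f 0 a Hf ltac:(lra)) as p1.
  pose proof (integ_nonneg f a b Hf Hab) as p2.
  pose proof (integ_nonneg f 0 b Hf ltac:(lra)) as p3.
  rewrite (integral_val f b p3), (integral_val f a p1).
  rewrite <- (RiemannInt_P26 p1 p2 p3).
  replace (RiemannInt p1 + RiemannInt p2 - RiemannInt p1) with (RiemannInt p2) by ring.
  apply RiemannInt_const_bound; [lra|]. intros; apply Hb; lra.
Qed.

Lemma sumN_S N f : sumN (S N) f = sumN N f + f N.
Proof.
  unfold sumN. rewrite seq_S, map_app, fold_right_app. simpl.
  generalize (f N). induction (map f (seq 0 N)) as [|a l IH]; intros r; simpl.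
  - ring.
  - rewrite IH. ring.
Qed.

Lemma sumN_0 f : sumN 0 f = 0.
Proof. reflexivity. Qed.

Lemma sumN_ext N f g : (forall m, (m < N)%nat -> f m = g m) -> sumN N f = sumN N g.
Proof.
  induction N; intros H; [reflexivity|].
  rewrite !sumN_S, IHN, H; auto; intros; apply H; lia.
Qed.

Lemma sumN_le N f g : (forall m, (m < N)%nat -> f m <= g m) -> sumN N f <= sumN N g.
Proof.
  induction N; intros H; [rewrite !sumN_0; lra|].
  rewrite !sumN_S. assert (f N <= g N) by (apply H; lia).
  assert (sumN N f <= sumN N g) by (apply IHN; intros; apply H; lia). lra.
Qed.

Lemma sumN_lt N f g n : (forall m, (m < N)%nat -> f m <= g m) -> (n < N)%nat ->
  f n < g n -> sumN N f < sumN N g.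
Proof.
  induction N; intros H Hn Hlt; [lia|].
  rewrite !sumN_S. assert (f N <= g N) by (apply H; lia).
  destruct (Nat.eq_dec n N) as [->|Hne].
  - assert (sumN N f <= sumN N g) by (apply sumN_le; intros; apply H; lia). lra.
  - assert (sumN N f < sumN N g) by (apply IHN; [intros; apply H; lia | lia | exact Hlt]). lra.
Qed.

Lemma sumN_minus N f g : sumN N (fun m => f m - g m) = sumN N f - sumN N g.
Proof. induction N; [simpl; unfold sumN; simpl; ring|]. rewrite !sumN_S, IHN. ring. Qed.

Lemma sumN_scal N c f : sumN N (fun m => c * f m) = c * sumN N f.
Proof. induction N; [unfold sumN; simpl; ring|]. rewrite !sumN_S, IHN. ring. Qed.

Lemma sumN_zero N : sumN N (fun _ => 0) = 0.
Proof. induction N; [reflexivity|]. rewrite sumN_S, IHN. ring. Qed.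

Lemma sumN_nonneg N f : (forall m, (m < N)%nat -> 0 <= f m) -> 0 <= sumN N f.
Proof. intros H. rewrite <- (sumN_zero N). apply sumN_le. auto. Qed.

Lemma sumN_ge_term N f n : (forall m, (m < N)%nat -> 0 <= f m) -> (n < N)%nat ->
  f n <= sumN N f.
Proof.
  induction N; intros H Hn; [lia|]. rewrite sumN_S.
  assert (0 <= f N) by (apply H; lia).
  assert (0 <= sumN N f) by (apply sumN_nonneg; intros; apply H; lia).
  destruct (Nat.eq_dec n N) as [->|Hne]; [lra|].
  assert (f n <= sumN N f) by (apply IHN; [intros; apply H; lia| lia]). lra.
Qed.

Lemma sumN_upd N f g n : (n < N)%nat -> (forall m, m <> n -> g m = f m) ->
  sumN N g = sumN N f + (g n - f n).
Proof.
  induction N; intros Hn H; [lia|]. rewrite !sumN_S.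
  destruct (Nat.eq_dec n N) as [->|Hne].
  - rewrite (sumN_ext N g f); [ring|]. intros; apply H; lia.
  - rewrite IHN; [|lia|exact H]. rewrite (H N) by lia. ring.
Qed.

Definition upd (x : nat -> R) (n : nat) (h : R) : nat -> R :=
  fun m => if Nat.eq_dec m n then x m + h else x m.

Lemma upd_eq x n h : upd x n h n = x n + h.
Proof. unfold upd; destruct Nat.eq_dec; congruence. Qed.
Lemma upd_neq x n h m : m <> n -> upd x n h m = x m.
Proof. unfold upd; destruct Nat.eq_dec; congruence. Qed.

Lemma quot_le (A h s : R) : 0 < h -> A <= h * s -> A / h <= s.
Proof. intros Hh HA. apply (Rmult_le_reg_r h); [lra|]. unfold Rdiv. rewrite Rmult_assoc, Rinv_l; lra. Qed.
Lemma quot_ge_neg (A h s : R) : h < 0 -> A <= h * s -> s <= A / h.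
Proof. intros Hh HA. apply (Rmult_le_reg_r (-h)); [lra|]. unfold Rdiv.
  replace (A * / h * - h) with (- A) by (field; lra). lra. Qed.

Lemma tangent_right f x y L : convex_nonneg f -> 0 <= x < y -> right_deriv f x L ->
  f x + L * (y - x) <= f y.
Proof.
  intros Hc Hxy Hd. set (d := y - x). set (s := (f y - f x) / d).
  assert (Hd0 : 0 < d) by (unfold d; lra).
  assert (Hfs : f y = f x + s * d) by (unfold s; field; lra).
  destruct (Rle_dec (f x + L * (y - x)) (f y)) as [ok|nok]; [exact ok|exfalso].
  fold d in nok. assert (s < L) by nra.
  destruct (Hd (L - s) ltac:(lra)) as [de [Hde Hq]].
  set (h := Rmin de d / 2).
  assert (Hh : 0 < h < de /\ h < d).
  { unfold h. pose proof (Rmin_l de d). pose proof (Rmin_r de d).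
    assert (0 < Rmin de d) by (apply Rmin_glb_lt; lra). lra. }
  specialize (Hq h ltac:(lra)).
  pose proof (Hc y x (h / d) ltac:(lra) ltac:(lra)) as Hcv.
  assert (0 <= h / d <= 1).
  { split. apply Rlt_le, Rdiv_lt_0_compat; lra.
    apply (Rmult_le_reg_r d); [lra|]. unfold Rdiv. rewrite Rmult_assoc, Rinv_l; lra. }
  specialize (Hcv H0).
  replace (h / d * y + (1 - h / d) * x) with (x + h) in Hcv by (unfold d; field; lra).
  assert (f (x + h) - f x <= h * s).
  { replace (h / d * f y + (1 - h / d) * f x) with (f x + h * s) in Hcv
      by (rewrite Hfs; field; lra). lra. }
  pose proof (quot_le _ h _ ltac:(lra) H1).
  apply Rabs_def2 in Hq. lra.
Qed.

Lemma tangent_left f x y L : convex_nonneg f -> 0 <= y < x -> left_deriv f x L ->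
  f x + L * (y - x) <= f y.
Proof.
  intros Hc Hxy Hd. set (d := x - y). set (s := (f x - f y) / d).
  assert (Hd0 : 0 < d) by (unfold d; lra).
  assert (Hfs : f y = f x - s * d) by (unfold s; field; lra).
  destruct (Rle_dec (f x + L * (y - x)) (f y)) as [ok|nok]; [exact ok|exfalso].
  replace (y - x) with (- d) in nok by (unfold d; ring).
  assert (L < s) by nra.
  destruct (Hd (s - L) ltac:(lra)) as [de [Hde Hq]].
  set (h := Rmin de d / 2).
  assert (Hh : 0 < h < de /\ h < d).
  { unfold h. pose proof (Rmin_l de d). pose proof (Rmin_r de d).
    assert (0 < Rmin de d) by (apply Rmin_glb_lt; lra). lra. }
  specialize (Hq (- h) ltac:(lra)).
  pose proof (Hc y x (h / d) ltac:(lra) ltac:(lra)) as Hcv.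
  assert (0 <= h / d <= 1).
  { split. apply Rlt_le, Rdiv_lt_0_compat; lra.
    apply (Rmult_le_reg_r d); [lra|]. unfold Rdiv. rewrite Rmult_assoc, Rinv_l; lra. }
  specialize (Hcv H0).
  replace (h / d * y + (1 - h / d) * x) with (x + - h) in Hcv by (unfold d; field; lra).
  assert (f (x + - h) - f x <= (- h) * s).
  { replace (h / d * f y + (1 - h / d) * f x) with (f x - h * s) in Hcv
      by (rewrite Hfs; field; lra). lra. }
  pose proof (quot_ge_neg _ (- h) _ ltac:(lra) H1).
  apply Rabs_def2 in Hq. lra.
Qed.

Lemma deriv_lr f x L : derivable_pt_lim f x L -> right_deriv f x L /\ left_deriv f x L.
Proof.
  intros Hd. split; intros eps Heps; destruct (Hd eps Heps) as [de Hde];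
    exists de; split; try apply cond_pos; intros h Hh; apply Hde;
    [intro; lra | unfold Rabs; destruct Rcase_abs; lra|intro; lra | unfold Rabs; destruct Rcase_abs; lra].
Qed.

Lemma tangent f x y L : convex_nonneg f -> 0 <= x -> 0 <= y -> right_deriv f x L ->
  (0 < x -> left_deriv f x L) -> f x + L * (y - x) <= f y.
Proof.
  intros Hc Hx Hy Hr Hl.
  destruct (Rtotal_order x y) as [H|[H|H]].
  - apply tangent_right; auto.
  - subst; lra.
  - apply tangent_left; [auto|lra|apply Hl; lra].
Qed.

Lemma rd_nonpos f q L : nonincreasing_nonneg f -> 0 <= q -> right_deriv f q L -> L <= 0.
Proof.
  intros Hm Hq Hd. destruct (Rle_dec L 0) as [ok|nok]; [exact ok|exfalso].
  destruct (Hd L ltac:(lra)) as [de [Hde H]].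
  specialize (H (de/2) ltac:(lra)).
  assert ((f (q + de/2) - f q) / (de/2) <= 0).
  { apply quot_le; [lra|]. pose proof (Hm q (q + de/2) Hq ltac:(lra)). lra. }
  apply Rabs_def2 in H. lra.
Qed.

Lemma ld_nonpos f q L : nonincreasing_nonneg f -> 0 < q -> left_deriv f q L -> L <= 0.
Proof.
  intros Hm Hq Hd. destruct (Rle_dec L 0) as [ok|nok]; [exact ok|exfalso].
  destruct (Hd L ltac:(lra)) as [de [Hde H]].
  set (h := Rmin de q / 2).
  assert (Hh : 0 < h < de /\ h < q).
  { unfold h. pose proof (Rmin_l de q). pose proof (Rmin_r de q).
    assert (0 < Rmin de q) by (apply Rmin_glb_lt; lra). lra. }
  specialize (H (- h) ltac:(lra)).
  assert ((f (q + - h) - f q) / (- h) <= 0).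
  { pose proof (Hm (q + - h) q ltac:(lra) ltac:(lra)).
    apply (Rmult_le_reg_r h); [lra|]. unfold Rdiv.
    replace ((f (q + - h) - f q) * / - h * h) with (- (f (q + - h) - f q)) by (field; lra). lra. }
  apply Rabs_def2 in H. lra.
Qed.

Lemma ld_le_rd f q L1 L2 : convex_nonneg f -> 0 < q -> left_deriv f q L1 ->
  right_deriv f q L2 -> L1 <= L2.
Proof.
  intros Hc Hq Hl Hr. destruct (Rle_dec L1 L2) as [ok|nok]; [exact ok|exfalso].
  set (e := (L1 - L2) / 2).
  destruct (Hl e ltac:(unfold e; lra)) as [d1 [Hd1 H1]].
  destruct (Hr e ltac:(unfold e; lra)) as [d2 [Hd2 H2]].
  set (h := Rmin (Rmin d1 d2) q / 2).
  assert (Hh : 0 < h < d1 /\ h < d2 /\ h < q).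
  { unfold h. pose proof (Rmin_l (Rmin d1 d2) q). pose proof (Rmin_r (Rmin d1 d2) q).
    pose proof (Rmin_l d1 d2). pose proof (Rmin_r d1 d2).
    assert (0 < Rmin d1 d2) by (apply Rmin_glb_lt; lra).
    assert (0 < Rmin (Rmin d1 d2) q) by (apply Rmin_glb_lt; lra). lra. }
  specialize (H1 (- h) ltac:(lra)). specialize (H2 h ltac:(lra)).
  apply Rabs_def2 in H1. apply Rabs_def2 in H2.
  pose proof (Hc (q + - h) (q + h) (1/2) ltac:(lra) ltac:(lra) ltac:(lra)) as Hcv.
  replace (1 / 2 * (q + - h) + (1 - 1 / 2) * (q + h)) with q in Hcv by field.
  assert (E1 : (f (q + - h) - f q) / - h = (f q - f (q + - h)) / h) by (field; lra).
  rewrite E1 in H1.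
  assert ((f q - f (q + - h)) / h <= (f (q + h) - f q) / h).
  { unfold Rdiv. apply Rmult_le_compat_r. apply Rlt_le, Rinv_0_lt_compat; lra. lra. }
  unfold e in *. lra.
Qed.

Lemma rd_const f q L d : 0 < d -> (forall h, 0 < h < d -> f (q + h) = f q) ->
  right_deriv f q L -> L = 0.
Proof.
  intros Hd Hc Hr.
  destruct (Req_dec L 0) as [ok|nok]; [exact ok|exfalso].
  assert (HL : 0 < Rabs L) by (apply Rabs_pos_lt; exact nok).
  destruct (Hr (Rabs L) ltac:(lra)) as [de [Hde H]].
  set (h := Rmin de d / 2).
  assert (Hh : 0 < h < de /\ h < d).
  { unfold h. pose proof (Rmin_l de d). pose proof (Rmin_r de d).
    assert (0 < Rmin de d) by (apply Rmin_glb_lt; lra). lra. }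
  specialize (H h ltac:(lra)). rewrite Hc in H by lra.
  replace ((f q - f q) / h - L) with (- L) in H by (field; lra).
  rewrite Rabs_Ropp in H. lra.
Qed.

Lemma lr_deriv f x : left_deriv f x 0 -> right_deriv f x 0 -> derivable_pt_lim f x 0.
Proof.
  intros Hl Hr eps Heps.
  destruct (Hl eps Heps) as [d1 [Hd1 H1]]. destruct (Hr eps Heps) as [d2 [Hd2 H2]].
  assert (Hm : 0 < Rmin d1 d2) by (apply Rmin_glb_lt; lra).
  exists (mkposreal _ Hm). intros h Hh0 Hh. simpl in Hh.
  pose proof (Rmin_l d1 d2). pose proof (Rmin_r d1 d2).
  destruct (Rtotal_order h 0) as [Hn|[Hz|Hp]].
  - apply H1. rewrite Rabs_left in Hh by lra. lra.
  - contradiction.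
  - apply H2. rewrite Rabs_right in Hh by lra. lra.
Qed.

Lemma total_upd N x n h : (n < N)%nat -> total N (upd x n h) = total N x + h.
Proof.
  intros Hn. unfold total. rewrite (sumN_upd N x (upd x n h) n Hn).
  - rewrite upd_eq. ring.
  - intros; apply upd_neq; auto.
Qed.

Lemma cost_upd N (C : nat -> R -> R) x n h : (n < N)%nat ->
  sumN N (fun m => C m (upd x n h m)) =
  sumN N (fun m => C m (x m)) + (C n (x n + h) - C n (x n)).
Proof.
  intros Hn. rewrite (sumN_upd N (fun m => C m (x m)) (fun m => C m (upd x n h m)) n Hn).
  - rewrite upd_eq. reflexivity.
  - intros; simpl; rewrite upd_neq; auto.
Qed.

Lemma nonneg_upd N x n h : nonneg_vec N x -> 0 <= h -> nonneg_vec N (upd x n h).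
Proof.
  intros Hx Hh m Hm. unfold upd. destruct Nat.eq_dec; specialize (Hx m Hm); lra.
Qed.

Lemma rd_of_cost C dC y : cost_assumption C dC -> 0 <= y -> right_deriv C y (dC y).
Proof.
  intros [_ [_ [_ [Hd [_ [Hr _]]]]]] Hy.
  destruct (Req_dec y 0) as [->|Hne]; [exact Hr|].
  apply deriv_lr, Hd; lra.
Qed.

Lemma ld_of_cost C dC y : cost_assumption C dC -> 0 < y -> left_deriv C y (dC y).
Proof. intros [_ [_ [_ [Hd _]]]] Hy. apply deriv_lr, Hd; lra. Qed.

Lemma cost_tangent C dC a b : cost_assumption C dC -> 0 <= a -> 0 <= b ->
  C a + dC a * (b - a) <= C b.
Proof.
  intros HC Ha Hb. apply tangent; auto.
  - destruct HC; auto.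
  - apply rd_of_cost; auto.
  - intros; apply ld_of_cost; auto.
Qed.

Lemma foc N p (C dC : nat -> R -> R) xS n a :
  (forall n, (n < N)%nat -> cost_assumption (C n) (dC n)) ->
  continuous_nonneg p -> nonincreasing_nonneg p ->
  social_optimum N p C xS -> (n < N)%nat -> 0 < a -> xS n <= a ->
  p (total N xS) <= dC n a.
Proof.
  intros HC Hpc Hpm [HxSn Hopt] Hn Ha Hsa.
  set (XS := total N xS). set (s := xS n).
  assert (Hs : 0 <= s) by (apply HxSn; auto).
  assert (HXS : 0 <= XS) by (apply sumN_nonneg; auto).
  destruct (Rle_dec (p XS) (dC n a)) as [ok|nok]; [exact ok|exfalso].
  set (eps := (p XS - dC n a) / 2).
  assert (Heps : 0 < eps) by (unfold eps; lra).
  destruct (Hpc XS HXS eps Heps) as [d1 [Hd1 Hc1]].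
  pose proof (HC n Hn) as HCn.
  destruct HCn as [_ [_ [_ [_ [HdC _]]]]].
  destruct (HdC a Ha eps Heps) as [d2 [Hd2 Hc2]].
  set (h := Rmin d1 d2 / 2).
  assert (Hh : 0 < h < d1 /\ h < d2).
  { unfold h. pose proof (Rmin_l d1 d2). pose proof (Rmin_r d1 d2).
    assert (0 < Rmin d1 d2) by (apply Rmin_glb_lt; lra). lra. }
  pose proof (Hopt (upd xS n h) (nonneg_upd N xS n h HxSn ltac:(lra))) as Hw.
  unfold welfare in Hw. rewrite total_upd, cost_upd in Hw by auto. fold XS s in Hw.
  assert (HI : h * p (XS + h) <= integral p 0 (XS + h) - integral p 0 XS).
  { pose proof (integral_bound p XS (XS + h) (p (XS + h)) (p XS) Hpc ltac:(lra)) as B.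
    replace (XS + h - XS) with h in B by ring.
    assert (h * p (XS + h) = p (XS + h) * h) by ring.
    destruct B as [B _]; [intros z Hz; split; apply Hpm; lra|lra]. }
  assert (T1 : C n (s + h) - C n s <= h * dC n (s + h)).
  { pose proof (cost_tangent (C n) (dC n) (s + h) s (HC n Hn) ltac:(lra) Hs). lra. }
  assert (T2 : dC n (s + h) <= dC n (a + h)).
  { destruct (Req_dec s a) as [E|E]; [rewrite E; lra|].
    pose proof (cost_tangent (C n) (dC n) (s + h) (a + h) (HC n Hn) ltac:(lra) ltac:(lra)).
    pose proof (cost_tangent (C n) (dC n) (a + h) (s + h) (HC n Hn) ltac:(lra) ltac:(lra)).
    assert (0 < a - s) by (unfold s in *; destruct (Rle_lt_or_eq_dec _ _ Hsa); [lra|contradiction]).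
    assert ((dC n (s + h) - dC n (a + h)) * (a - s) <= 0) by nra. nra. }
  assert (Hpd : p (XS + h) <= dC n (a + h)) by nra.
  specialize (Hc1 (XS + h) ltac:(lra)).
  replace (XS + h - XS) with h in Hc1 by ring.
  rewrite Rabs_right in Hc1 by lra. specialize (Hc1 ltac:(lra)).
  apply Rabs_def2 in Hc1.
  assert (Hc2' : Rabs (dC n (a + h) - dC n a) < eps).
  { apply (Hc2 (a + h)). split. split; [exact I| lra].
    simpl. unfold R_dist. replace (a + h - a) with h by ring. rewrite Rabs_right; lra. }
  apply Rabs_def2 in Hc2'. unfold eps in *. lra.
Qed.

Lemma wpos N p (C dC : nat -> R -> R) xS n0 :
  (forall n, (n < N)%nat -> cost_assumption (C n) (dC n)) ->
  continuous_nonneg p -> nonincreasing_nonneg p ->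
  social_optimum N p C xS -> (n0 < N)%nat -> dC n0 0 < p 0 ->
  0 < welfare N p C xS.
Proof.
  intros HC Hpc Hpm [HxSn Hopt] Hn Hlt.
  set (eta := (p 0 - dC n0 0) / 2).
  assert (Heta : 0 < eta) by (unfold eta; lra).
  pose proof (HC n0 Hn) as HCn.
  destruct HCn as [_ [_ [_ [_ [_ [Hr HC0]]]]]].
  destruct (Hr eta Heta) as [d1 [Hd1 Hc1]].
  destruct (Hpc 0 (Rle_refl 0) eta Heta) as [d2 [Hd2 Hc2]].
  set (h := Rmin d1 d2 / 2).
  assert (Hh : 0 < h < d1 /\ h < d2).
  { unfold h. pose proof (Rmin_l d1 d2). pose proof (Rmin_r d1 d2).
    assert (0 < Rmin d1 d2) by (apply Rmin_glb_lt; lra). lra. }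
  set (z := fun _ : nat => 0).
  assert (Hz : nonneg_vec N z) by (intros m _; unfold z; lra).
  pose proof (Hopt (upd z n0 h) (nonneg_upd N z n0 h Hz ltac:(lra))) as Hw.
  eapply Rlt_le_trans; [|exact Hw]. unfold welfare.
  rewrite total_upd, cost_upd by auto.
  assert (Ez : total N z = 0) by apply sumN_zero.
  assert (Ec : sumN N (fun m => C m (z m)) = 0).
  { rewrite <- (sumN_zero N). apply sumN_ext. intros m Hm. unfold z.
    destruct (HC m Hm) as [_ [_ [_ [_ [_ [_ E]]]]]]. exact E. }
  rewrite Ez, Ec. unfold z. rewrite HC0. rewrite !Rplus_0_l.
  assert (HI : h * p h <= integral p 0 h).
  { pose proof (integral_bound p 0 h (p h) (p 0) Hpc ltac:(lra)) as B.
    replace (integral p 0 0) with 0 in B.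
    2:{ symmetry. rewrite (integral_val p 0 (integ_nonneg p 0 0 Hpc ltac:(lra))).
        apply RiemannInt_P9. }
    destruct B as [B _]; [intros y Hy; split; apply Hpm; lra|lra]. }
  specialize (Hc1 h ltac:(lra)). rewrite Rplus_0_l, HC0 in Hc1.
  apply Rabs_def2 in Hc1.
  specialize (Hc2 h ltac:(lra)). rewrite Rminus_0_r, Rabs_right in Hc2 by lra.
  specialize (Hc2 ltac:(lra)). apply Rabs_def2 in Hc2.
  assert (C n0 h / h < dC n0 0 + eta) by lra.
  assert (C n0 h < h * (dC n0 0 + eta)).
  { replace (C n0 h) with (C n0 h / h * h) by (field; lra). nra. }
  unfold eta in *. nra.
Qed.

Theorem proposition8
  (N : nat) (p dpr dpl : R -> R) (C dC : nat -> R -> R) (x xS : nat -> R)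
  (HA1 : forall n, (n < N)%nat -> cost_assumption (C n) (dC n))
  (HA2 : price_assumption p dpr dpl)
  (HA3 : exists Rb, 0 < Rb /\ forall n, (n < N)%nat -> p Rb <= dC n 0)
  (HA4 : exists n, (n < N)%nat /\ dC n 0 < p 0)
  (Hconv : convex_nonneg p)
  (Hx : cournot_candidate N p dpr dpl dC x)
  (HxS : social_optimum N p C xS)
  (Heq : p (total N x) = p (total N xS)) :
  0 < total N x /\ derivable_pt_lim p (total N x) 0 /\
  efficiency N p C x xS = 1.
Proof.
  pose proof HA2 as [Hpc [Hp0 [Hpm [Hp0pos [Hdpr Hdpl]]]]].
  pose proof Hx as [Hxn Hxc]. pose proof HxS as [HxSn HxSopt].
  set (X := total N x) in *. set (XS := total N xS) in *.
  assert (HX0 : 0 <= X) by (apply sumN_nonneg; auto).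
  assert (HXS0 : 0 <= XS) by (apply sumN_nonneg; auto).
  destruct HA4 as [n0 [Hn0 Hlt0]].
  assert (HX : 0 < X).
  { destruct (Rlt_dec 0 X) as [ok|nok]; [exact ok|exfalso].
    assert (x n0 <= X) by (apply sumN_ge_term; auto).
    assert (Hx0 : x n0 = 0) by (pose proof (Hxn n0 Hn0); lra).
    assert (HX' : X = 0) by lra.
    destruct (Hxc n0 Hn0) as [_ H2]. rewrite Hx0, HX' in H2. lra. }
  assert (Hn1 : exists n1, (n1 < N)%nat /\ 0 < x n1).
  { apply NNPP. intros Hno.
    assert (X <= 0).
    { unfold X, total. rewrite <- (sumN_zero N). apply sumN_le.
      intros m Hm. destruct (Rle_dec (x m) 0) as [ok|nok]; [exact ok|].
      exfalso; apply Hno; exists m; split; auto; lra. }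
    lra. }
  destruct Hn1 as [n1 [Hn1 Hx1]].
  pose proof (Hdpl X HX) as Hl. pose proof (Hdpr X HX0) as Hr.
  assert (Hl0 : dpl X <= 0) by exact (ld_nonpos p X _ Hpm HX Hl).
  assert (Hr0 : dpr X <= 0) by exact (rd_nonpos p X _ Hpm HX0 Hr).
  assert (Hrl : dpr X <= dpl X).
  { destruct (Hxc n1 Hn1) as [H1 H2]. specialize (H1 Hx1). nra. }
  assert (Hd : dpl X = 0 /\ dpr X = 0).
  { destruct (Rlt_dec X XS) as [Hlt|Hge].
    - assert (dpr X = 0).
      { apply (rd_const p X (dpr X) (XS - X)); [lra| |exact Hr].
        intros h Hh. pose proof (Hpm X (X + h) HX0 ltac:(lra)).
        pose proof (Hpm (X + h) XS ltac:(lra) ltac:(lra)). lra. }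
      lra.
    - assert (Hn2 : exists n2, (n2 < N)%nat /\ 0 < x n2 /\ xS n2 <= x n2).
      { apply NNPP. intros Hno.
        assert (Hall : forall m, (m < N)%nat -> x m <= xS m).
        { intros m Hm. pose proof (Hxn m Hm). pose proof (HxSn m Hm).
          destruct (Rle_dec (x m) (xS m)) as [ok|nok]; [exact ok|].
          exfalso; apply Hno; exists m; repeat split; auto; lra. }
        assert (x n1 < xS n1).
        { pose proof (Hall n1 Hn1). destruct (Rle_lt_or_eq_dec _ _ H) as [ok|E]; [exact ok|].
          exfalso; apply Hno; exists n1; repeat split; auto; lra. }
        assert (X < XS) by (apply (sumN_lt N x xS n1); auto). lra. }
      destruct Hn2 as [n2 [Hn2 [Hx2 Hs2]]].
      pose proof (foc N p C dC xS n2 (x n2) HA1 Hpc Hpm HxS Hn2 Hx2 Hs2) as Hf.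
      fold XS in Hf. rewrite <- Heq in Hf.
      destruct (Hxc n2 Hn2) as [H1 _]. specialize (H1 Hx2).
      assert (dpl X = 0) by nra.
      pose proof (ld_le_rd p X _ _ Hconv HX Hl Hr). lra. }
  destruct Hd as [Hdl Hdr].
  split; [exact HX|]. split.
  { apply lr_deriv; [rewrite <- Hdl; exact Hl | rewrite <- Hdr; exact Hr]. }
  set (P := p X) in *.
  assert (Hwpos : 0 < welfare N p C xS) by exact (wpos N p C dC xS n0 HA1 Hpc Hpm HxS Hn0 Hlt0).
  assert (Hle1 : welfare N p C x <= welfare N p C xS) by (apply HxSopt; auto).
  assert (Hcost : P * (XS - X) <=
     sumN N (fun m => C m (xS m)) - sumN N (fun m => C m (x m))).
  { unfold XS, X, total. rewrite <- sumN_minus, <- sumN_minus, <- sumN_scal.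
    apply sumN_le. intros m Hm.
    pose proof (cost_tangent (C m) (dC m) (x m) (xS m) (HA1 m Hm) (Hxn m Hm) (HxSn m Hm)).
    destruct (Hxc m Hm) as [H1 H2]. rewrite Hdl in H1. rewrite Hdr in H2.
    fold X in H1, H2. fold P in H1, H2.
    pose proof (Hxn m Hm). pose proof (HxSn m Hm).
    destruct (Rle_lt_or_eq_dec _ _ (Hxn m Hm)) as [Hp|Hz].
    - specialize (H1 Hp). assert (dC m (x m) = P) by lra. rewrite H4 in H. lra.
    - rewrite <- Hz in *. assert (P * (xS m - 0) <= dC m 0 * (xS m - 0)) by nra. lra. }
  assert (Hint : integral p 0 XS - integral p 0 X <= P * (XS - X)).
  { destruct (Rle_dec X XS) as [Hle|Hgt].
    - pose proof (integral_bound p X XS 0 P Hpc ltac:(lra)) as B.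
      destruct B as [_ B]; [|lra]. intros z Hz. split; [apply Hp0; lra|].
      apply Hpm; lra.
    - pose proof (integral_bound p XS X P (p 0) Hpc ltac:(lra)) as B.
      destruct B as [B _]; [|lra]. intros z Hz. split; apply Hpm; lra. }
  assert (Hle2 : welfare N p C xS <= welfare N p C x).
  { unfold welfare. fold X XS. lra. }
  unfold efficiency. replace (welfare N p C x) with (welfare N p C xS) by lra.
  field. lra.
Qed.
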